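(* Let $\Phi_\beta$ ($\beta\ge0$) be as in Assumption F2 and let $\Pi_\Phi=\{i: s_i\ne0\}$. Let $0\le\beta_1<\beta_0$, let $y$ be any minimizer of $\Phi_{\beta_1}$ and $z$ any minimizer of $\Phi_{\beta_0}$ over $\{0,1\}^n$. Then $H(y)\cap\Pi_\Phi\supseteq H(z)\cap\Pi_\Phi$.
   Context: Assumption F2: for $\beta\ge0$, $\Phi_\beta(x)=-\sum_{1\le i<j\le n}a_{i,j}x_ix_j+\beta\sum_{i=1}^n s_ix_i$ on $x\in\{0,1\}^n$, where all $a_{i,j}\ge0$ and all $s_i\ge0$ are rationals. $H(x)=\{i:x_i=1\}$. *)

(* Defs.v *)
From mathcomp Require Import all_boot all_order all_algebra.
Set Implicit Arguments. Unset Strict Implicit. Unset Printing Implicit Defensive.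
Import Order.TTheory GRing.Theory Num.Theory.
Local Open Scope ring_scope.

(* Assumption F2: points x in {0,1}^n are boolean finite functions on 'I_n;
   x_i = 1 iff x i = true. *)
Definition bval (R : pzRingType) (b : bool) : R := if b then 1 else 0.

Definition Phi (R : realFieldType) (n : nat) (a : 'I_n -> 'I_n -> rat)
  (s : 'I_n -> rat) (beta : R) (x : {ffun 'I_n -> bool}) : R :=
  - (\sum_(i < n) \sum_(j < n | (i < j)%N) ratr (a i j) * bval R (x i) * bval R (x j))
  + beta * \sum_(i < n) ratr (s i) * bval R (x i).

Definition Hset (n : nat) (x : {ffun 'I_n -> bool}) : {set 'I_n} := [set i | x i].

Definition PiPhi (n : nat) (s : 'I_n -> rat) : {set 'I_n} := [set i | s i != 0].

(* Main.v *)
Require Import Defs.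
From mathcomp Require Import all_boot all_order all_algebra.
From mathcomp Require Import ring lra.
Import Order.TTheory GRing.Theory Num.Theory.
Local Open Scope ring_scope.

Lemma key_ineq (R : realFieldType) (b1 b2 c1 c2 : bool) :
  bval R b1 * bval R b2 + bval R c1 * bval R c2 <=
  bval R (b1 || c1) * bval R (b2 || c2) + bval R (b1 && c1) * bval R (b2 && c2).
Proof. by case: b1; case: b2; case: c1; case: c2; rewrite /bval /=; lra. Qed.

Lemma key_eq (R : realFieldType) (b c : bool) :
  bval R (b || c) + bval R (b && c) = bval R b + bval R c.
Proof. by case: b; case: c; rewrite /bval /=; lra. Qed.

Lemma term_ineq (R : realFieldType) (c : R) (b1 b2 c1 c2 : bool) : 0 <= c ->
  c * bval R b1 * bval R b2 + c * bval R c1 * bval R c2 <=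
  c * bval R (b1 || c1) * bval R (b2 || c2) + c * bval R (b1 && c1) * bval R (b2 && c2).
Proof. move=> hc; rewrite -!mulrA -!mulrDr; apply: ler_wpM2l => //; exact: key_ineq. Qed.

Lemma term_eq (R : realFieldType) (c : R) (b d : bool) :
  c * bval R (b || d) + c * bval R (b && d) = c * bval R b + c * bval R d.
Proof. by rewrite -!mulrDr key_eq. Qed.

Theorem mainTheorem13 (R : realFieldType) (n : nat)
  (a : 'I_n -> 'I_n -> rat) (s : 'I_n -> rat)
  (ha : forall i j : 'I_n, (i < j)%N -> 0 <= a i j)
  (hs : forall i : 'I_n, 0 <= s i)
  (beta1 beta0 : R) (hb1 : 0 <= beta1) (hb10 : beta1 < beta0)
  (y z : {ffun 'I_n -> bool})
  (hy : forall x : {ffun 'I_n -> bool}, Phi a s beta1 y <= Phi a s beta1 x)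
  (hz : forall x : {ffun 'I_n -> bool}, Phi a s beta0 z <= Phi a s beta0 x) :
  Hset z :&: PiPhi s \subset Hset y :&: PiPhi s.
Proof.
set Q := fun x : {ffun 'I_n -> bool} =>
  \sum_(i < n) \sum_(j < n | (i < j)%N) ratr (a i j) * bval R (x i) * bval R (x j).
set L := fun x : {ffun 'I_n -> bool} => \sum_(i < n) ratr (s i) * bval R (x i).
have PhiE : forall b x, Phi a s b x = - Q x + b * L x by [].
set u := [ffun i => y i || z i].
set w := [ffun i => y i && z i].
have h1 := hy u; have h2 := hz w.
rewrite !PhiE in h1 h2.
have HQ : Q y + Q z <= Q u + Q w.
  rewrite /Q -!big_split; apply: ler_sum => i _.
  rewrite -!big_split; apply: ler_sum => j ij.
  rewrite !ffunE; apply: term_ineq.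
  by rewrite ler0q; apply: ha.
have HL : L u + L w = L y + L z.
  rewrite /L -!big_split; apply: eq_bigr => i _.
  by rewrite !ffunE; apply: term_eq.
have H3 : (beta0 - beta1) * (L z - L w) <= 0.
  have HLu : L u = L y + L z - L w by lra.
  rewrite HLu in h1.
  have : beta1 * L y + beta0 * L z <= beta1 * (L y + L z - L w) + beta0 * L w by lra.
  move=> H; rewrite mulrBl !mulrBr; rewrite mulrBr mulrDr in H; lra.
have H4 : L z - L w <= 0.
  by rewrite -(pmulr_rle0 _ (_ : 0 < beta0 - beta1)) // subr_gt0.
have Hsum : L z - L w = \sum_(i < n) ratr (s i) * (bval R (z i) - bval R (w i)).
  by rewrite /L -sumrB; apply: eq_bigr => i _; rewrite mulrBr.
have Hge : forall i : 'I_n, true -> 0 <= ratr (s i) * (bval R (z i) - bval R (w i)) :> R.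
  move=> i _; rewrite ffunE; apply: mulr_ge0; first by rewrite ler0q.
  by case: (y i); case: (z i); rewrite /bval /=; lra.
have Hz0 : \sum_(i < n) ratr (s i) * (bval R (z i) - bval R (w i)) = 0 :> R.
  apply/eqP; rewrite eq_le -{1}Hsum H4 /=; exact: sumr_ge0.
have Hall := psumr_eq0P Hge Hz0.
apply/subsetP => i; rewrite !inE => /andP [zi si]; rewrite si andbT.
apply/negPn/negP => yi.
have := Hall i isT; rewrite ffunE zi (negbTE yi) /bval /= subr0 mulr1.
by move/eqP; rewrite fmorph_eq0 (negbTE si).
Qed.
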